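(* Let $\mathbf{E},\mathbf{F}$ be finite-dimensional Euclidean spaces, $\mathcal{K}\subset\mathbf{E}$ a proper cone, $\mathcal{A}:\mathbf{E}\to\mathbf{F}$ linear, $b\in\mathbf{F}$, $c\in\mathbf{E}$, and consider the conic program $\min\{\langle c,x\rangle : \mathcal{A}x=b,\ x\in\mathcal{K}\}$ with solution set $\mathcal{X}_\star$ and its dual $\max\{\langle b,y\rangle : c-\mathcal{A}^*y\in\mathcal{K}^*\}$. Suppose strong duality holds and dual strict complementarity holds for a primal–dual solution pair $(x_\star,y_\star)$ with slack $s_\star=c-\mathcal{A}^*y_\star$. Then there are constants $\gamma,\gamma'\ge0$ (which may be taken as $\gamma'=0$, $\gamma=1/\sigma_{\min}(\mathcal{A}_{\mathcal{V}_{s_\star}})$ when $\mathcal{X}_\star$ is a singleton) such that for all $x\in\mathbf{E}$, $$\begin{aligned}\mathrm{dist}(x,\mathcal{X}_\star)\le{}& (1+\gamma\sigma_{\max}(\mathcal{A}))\|P_{\mathcal{V}_{s_\star}^\perp}(x_+)\|_2+\gamma\|\mathcal{A}(x)-b\|_2\\&+(1+\gamma\sigma_{\max}(\mathcal{A}))\|P_{\mathcal{V}_{s_\star}^\perp}(x_-)\|_2+\gamma'\|P_{\mathcal{V}_{s_\star}}(x_-)\|_2+\gamma'\,\mathrm{dist}(P_{\mathcal{V}_{s_\star}}(x_+),\mathcal{F}_{s_\star}),\end{aligned}$$ where $x_+=P_{\mathcal{K}}(x)$ and $x_-=x-x_+$. (The terms $\|P_{\mathcal{V}_{s_\star}}(x_-)\|_2$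 and $\|P_{\mathcal{V}_{s_\star}^\perp}(x_-)\|_2$ are each bounded by $\|x_-\|_2$.)
   Context: $\mathcal{K}^*$ is the dual cone. Strong duality: the primal and dual solution sets are nonempty, $\mathcal{X}_\star$ is compact, and some solution pair $(x_\star,y_\star)$ satisfies $\langle s_\star,x_\star\rangle=0$ with $s_\star=c-\mathcal{A}^*y_\star$. Complementary face $\mathcal{F}_{s_\star}=\{x\in\mathcal{K}:\langle x,s_\star\rangle=0\}$; complementary space $\mathcal{V}_{s_\star}=\mathrm{aff}(\mathcal{F}_{s_\star})$, a linear subspace, with orthogonal complement $\mathcal{V}_{s_\star}^\perp$. Dual strict complementarity for $(x_\star,y_\star)$ means $x_\star\in\mathrm{relint}(\mathcal{F}_{s_\star})$. $P_C$ denotes the Euclidean projection onto a closed convex set $C$. $\sigma_{\max}(\mathcal{A})=\max_{\|x\|_2=1}\|\mathcal{A}x\|_2$; $\mathcal{A}_{\mathcal{V}_{s_\star}}$ is the restriction of $\mathcal{A}$ to $\mathcal{V}_{s_\star}$ and $\sigma_{\min}(\mathcal{A}_{\mathcal{V}_{s_\star}})=\min_{x\in\mathcal{V}_{s_\star},\|x\|_2=1}\|\mathcal{A}x\|_2$. $\mathrm{dist}(x,C)=\inf_{z\in C}\|x-z\|_2$. *)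

(* Defs.v *)
From HB Require Import structures.
From mathcomp Require Import all_boot all_order all_algebra.
From mathcomp Require Import boolp classical_sets reals.
Set Implicit Arguments. Unset Strict Implicit. Unset Printing Implicit Defensive.
Import Order.TTheory GRing.Theory Num.Theory.
Local Open Scope ring_scope.
Local Open Scope classical_set_scope.

(* The Euclidean space E = R^n is modelled by column vectors 'cV[R]_n with   *)
(* the standard inner product; F = R^m likewise; A : E -> F is a matrix, its *)
(* adjoint A^* is the transpose.                                             *)
Section Defs.
Variable R : realType.

Definition ip (n : nat) (u v : 'cV[R]_n) : R := \sum_(i < n) u i 0 * v i 0.
Definition enorm (n : nat) (u : 'cV[R]_n) : R := Num.sqrt (ip u u).

Definition eclosed (n : nat) (C : set 'cV[R]_n) : Prop :=
  forall x, (forall e : R, 0 < e -> exists z, C z /\ enorm (x - z) < e) -> C x.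

Definition ebounded (n : nat) (C : set 'cV[R]_n) : Prop :=
  exists M : R, forall x, C x -> enorm x <= M.

(* compact = closed and bounded (Heine-Borel, finite dimension) *)
Definition ecompact (n : nat) (C : set 'cV[R]_n) : Prop := eclosed C /\ ebounded C.

Definition proper_cone (n : nat) (K : set 'cV[R]_n) : Prop :=
  [/\ K 0,
      (forall x y, K x -> K y -> K (x + y)),
      (forall (t : R) x, 0 <= t -> K x -> K (t *: x)) &
      eclosed K] /\ [/\ 
      (forall x, K x -> K (- x) -> x = 0) &
      (exists x0, exists2 e : R, 0 < e & forall z, enorm (z - x0) < e -> K z)].

Definition dual_cone (n : nat) (K : set 'cV[R]_n) : set 'cV[R]_n :=
  [set s | forall x, K x -> 0 <= ip s x].

Definition proj (n : nat) (C : set 'cV[R]_n) (x : 'cV[R]_n) : 'cV[R]_n :=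
  xget x [set z | C z /\ forall w, C w -> enorm (x - z) <= enorm (x - w)].

Definition dist (n : nat) (x : 'cV[R]_n) (C : set 'cV[R]_n) : R :=
  inf [set enorm (x - z) | z in C].

Definition sigma_max (m n : nat) (A : 'M[R]_(m, n)) : R :=
  sup [set enorm (A *m x) | x in [set x : 'cV[R]_n | enorm x = 1]].

Definition sigma_min_on (m n : nat) (A : 'M[R]_(m, n)) (V : set 'cV[R]_n) : R :=
  inf [set enorm (A *m x) | x in [set x : 'cV[R]_n | V x /\ enorm x = 1]].

Definition aff (n : nat) (C : set 'cV[R]_n) : set 'cV[R]_n :=
  [set x | exists (k : nat) (p : 'I_k -> 'cV[R]_n) (w : 'I_k -> R),
      [/\ forall i, C (p i), \sum_(i < k) w i = 1 & x = \sum_(i < k) w i *: p i]].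

Definition relint (n : nat) (C : set 'cV[R]_n) : set 'cV[R]_n :=
  [set x | C x /\ exists2 e : R, 0 < e &
      forall z, aff C z -> enorm (z - x) < e -> C z].

Definition orth (n : nat) (V : set 'cV[R]_n) : set 'cV[R]_n :=
  [set v | forall u, V u -> ip u v = 0].

Definition primal_feas (m n : nat) (K : set 'cV[R]_n) (A : 'M[R]_(m, n))
  (b : 'cV[R]_m) : set 'cV[R]_n := [set x | A *m x = b /\ K x].

Definition primal_sol (m n : nat) (K : set 'cV[R]_n) (A : 'M[R]_(m, n))
  (b : 'cV[R]_m) (c : 'cV[R]_n) : set 'cV[R]_n :=
  [set x | primal_feas K A b x /\
           forall x', primal_feas K A b x' -> ip c x <= ip c x'].

Definition dual_feas (m n : nat) (K : set 'cV[R]_n) (A : 'M[R]_(m, n))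
  (c : 'cV[R]_n) : set 'cV[R]_m := [set y | dual_cone K (c - A^T *m y)].

Definition dual_sol (m n : nat) (K : set 'cV[R]_n) (A : 'M[R]_(m, n))
  (b : 'cV[R]_m) (c : 'cV[R]_n) : set 'cV[R]_m :=
  [set y | dual_feas K A c y /\
           forall y', dual_feas K A c y' -> ip b y' <= ip b y].

Definition strong_duality (m n : nat) (K : set 'cV[R]_n) (A : 'M[R]_(m, n))
  (b : 'cV[R]_m) (c : 'cV[R]_n) : Prop :=
  [/\ exists x, primal_sol K A b c x,
      exists y, dual_sol K A b c y,
      ecompact (primal_sol K A b c) &
      exists x y, [/\ primal_sol K A b c x, dual_sol K A b c y &
                      ip (c - A^T *m y) x = 0]].

Definition compl_face (n : nat) (K : set 'cV[R]_n) (s : 'cV[R]_n) : set 'cV[R]_n :=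
  [set x | K x /\ ip x s = 0].

Definition compl_space (n : nat) (K : set 'cV[R]_n) (s : 'cV[R]_n) : set 'cV[R]_n :=
  aff (compl_face K s).

Definition error_bound (m n : nat) (K : set 'cV[R]_n) (A : 'M[R]_(m, n))
  (b : 'cV[R]_m) (c : 'cV[R]_n) (s : 'cV[R]_n) (g g' : R) : Prop :=
  let X := primal_sol K A b c in
  let F := compl_face K s in
  let V := compl_space K s in
  forall x : 'cV[R]_n,
    let xp := proj K x in
    let xm := x - xp in
    dist x X <=
      (1 + g * sigma_max A) * enorm (proj (orth V) xp)
      + g * enorm (A *m x - b)
      + (1 + g * sigma_max A) * enorm (proj (orth V) xm)
      + g' * enorm (proj V xm)
      + g' * dist (proj V xp) F.

End Defs.

(* Main.v *)
Require Import Defs.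
From HB Require Import structures.
From mathcomp Require Import all_boot all_order all_algebra.
From mathcomp Require Import boolp classical_sets reals.
From mathcomp Require Import lra ring.
Import Order.TTheory GRing.Theory Num.Theory.
Local Open Scope ring_scope.
Local Open Scope classical_set_scope.
Set Implicit Arguments. Unset Strict Implicit. Unset Printing Implicit Defensive.

Section Basics.
Variable R : realType.
Implicit Types (k : nat).

Lemma ipE k (u v : 'cV[R]_k) : ip u v = (u^T *m v) 0 0.
Proof. by rewrite /ip !mxE; apply: eq_bigr => i _; rewrite mxE. Qed.

Lemma ipC k (u v : 'cV[R]_k) : ip u v = ip v u.
Proof. by apply: eq_bigr => i _; rewrite mulrC. Qed.

Lemma ipDl k (u v w : 'cV[R]_k) : ip (u + v) w = ip u w + ip v w.
Proof. by rewrite /ip -big_split; apply: eq_bigr => i _; rewrite mxE mulrDl. Qed.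

Lemma ipZl k a (u w : 'cV[R]_k) : ip (a *: u) w = a * ip u w.
Proof. by rewrite /ip mulr_sumr; apply: eq_bigr => i _; rewrite mxE mulrA. Qed.

Lemma ipNl k (u w : 'cV[R]_k) : ip (- u) w = - ip u w.
Proof. by rewrite -scaleN1r ipZl mulN1r. Qed.

Lemma ipBl k (u v w : 'cV[R]_k) : ip (u - v) w = ip u w - ip v w.
Proof. by rewrite ipDl ipNl. Qed.

Lemma ipDr k (u v w : 'cV[R]_k) : ip w (u + v) = ip w u + ip w v.
Proof. by rewrite ipC ipDl !(ipC w). Qed.
Lemma ipZr k a (u w : 'cV[R]_k) : ip w (a *: u) = a * ip w u.
Proof. by rewrite ipC ipZl ipC. Qed.
Lemma ipNr k (u w : 'cV[R]_k) : ip w (- u) = - ip w u.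
Proof. by rewrite ipC ipNl ipC. Qed.
Lemma ipBr k (u v w : 'cV[R]_k) : ip w (u - v) = ip w u - ip w v.
Proof. by rewrite ipDr ipNr. Qed.
Lemma ip0l k (u : 'cV[R]_k) : ip 0 u = 0.
Proof. by rewrite /ip big1 // => i _; rewrite mxE mul0r. Qed.
Lemma ip0r k (u : 'cV[R]_k) : ip u 0 = 0.
Proof. by rewrite ipC ip0l. Qed.

Lemma ip_ge0 k (u : 'cV[R]_k) : 0 <= ip u u.
Proof. by rewrite /ip sumr_ge0 // => i _; rewrite -expr2 sqr_ge0. Qed.

Lemma ip_eq0 k (u : 'cV[R]_k) : ip u u = 0 -> u = 0.
Proof.
move=> /eqP; rewrite /ip psumr_eq0 => [/allP H|i _]; last by rewrite -expr2 sqr_ge0.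
apply/matrixP => i j; rewrite (ord1 j) mxE.
have := H i (mem_index_enum _); rewrite /= mulf_eq0 orbb => /eqP //.
Qed.

Lemma ipMl p k (Q : 'M[R]_(p, k)) u v : ip (Q *m u) v = ip u (Q^T *m v).
Proof. by rewrite !ipE trmx_mul !mulmxA. Qed.

Lemma enorm_ge0 k (u : 'cV[R]_k) : 0 <= enorm u.
Proof. exact: sqrtr_ge0. Qed.

Lemma enorm_sq k (u : 'cV[R]_k) : enorm u ^+ 2 = ip u u.
Proof. by rewrite /enorm sqr_sqrtr // ip_ge0. Qed.

Lemma enorm0 k : enorm (0 : 'cV[R]_k) = 0.
Proof. by rewrite /enorm ip0l sqrtr0. Qed.

Lemma enorm_eq0 k (u : 'cV[R]_k) : enorm u = 0 -> u = 0.
Proof. by move=> h; apply: ip_eq0; rewrite -enorm_sq h expr0n. Qed.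

Lemma ler_sq_enorm (x y : R) : 0 <= y -> x ^+ 2 <= y ^+ 2 -> x <= y.
Proof.
move=> y0 h; case: (lerP x 0) => [x0|x0]; first exact: le_trans x0 y0.
by rewrite -(ler_pXn2r (_ : 0 < 2)%N) // nnegrE ltW.
Qed.

Lemma CS k (u v : 'cV[R]_k) : ip u v ^+ 2 <= ip u u * ip v v.
Proof.
have [v0|vn0] := eqVneq (ip v v) 0.
  by rewrite v0 mulr0 (ip_eq0 v0) ip0r expr0n.
have vp : 0 < ip v v by rewrite lt_neqAle eq_sym vn0 ip_ge0.
set t := ip u v / ip v v.
have := ip_ge0 (u - t *: v).
rewrite !ipBl !ipBr !ipZl !ipZr (ipC v u) => h.
have e : ip u u - t * ip u v - (t * ip u v - t * (t * ip v v)) = ip u u - ip u v ^+ 2 / ip v v.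
  by rewrite /t; field.
rewrite e subr_ge0 ler_pdivrMr // in h.
Qed.

Lemma CSn k (u v : 'cV[R]_k) : `|ip u v| <= enorm u * enorm v.
Proof.
apply: ler_sq_enorm; first by rewrite mulr_ge0 // enorm_ge0.
by rewrite exprMn !enorm_sq real_normK ?num_real // CS.
Qed.

Lemma enormD k (u v : 'cV[R]_k) : enorm (u + v) <= enorm u + enorm v.
Proof.
apply: ler_sq_enorm; first by rewrite addr_ge0 // enorm_ge0.
rewrite enorm_sq ipDl !ipDr (ipC v u) sqrrD !enorm_sq.
have := CSn u v; have := ler_norm (ip u v); lra.
Qed.

Lemma enormZ k a (u : 'cV[R]_k) : enorm (a *: u) = `|a| * enorm u.
Proof.
by rewrite /enorm ipZl ipZr mulrA -expr2 sqrtrM ?sqr_ge0 // sqrtr_sqr.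
Qed.

Lemma enormN k (u : 'cV[R]_k) : enorm (- u) = enorm u.
Proof. by rewrite -scaleN1r enormZ normrN normr1 mul1r. Qed.

Lemma enormB k (u v : 'cV[R]_k) : enorm (u - v) = enorm (v - u).
Proof. by rewrite -enormN opprB. Qed.

Lemma enormB_le k (u v : 'cV[R]_k) : enorm u - enorm v <= enorm (u - v).
Proof. have := enormD (u - v) v; rewrite subrK; lra. Qed.

Lemma pythag k (u v : 'cV[R]_k) : ip u v = 0 ->
  enorm (u + v) ^+ 2 = enorm u ^+ 2 + enorm v ^+ 2.
Proof. by move=> h; rewrite !enorm_sq ipDl !ipDr (ipC v u) h; lra. Qed.

Lemma sq_sum_le (I : Type) (r : seq I) (a : I -> R) : (forall i, 0 <= a i) ->
  \sum_(i <- r) a i ^+ 2 <= (\sum_(i <- r) a i) ^+ 2.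
Proof.
move=> a0; elim: r => [|x r IH]; first by rewrite !big_nil expr0n.
rewrite !big_cons sqrrD.
have : 0 <= \sum_(i <- r) a i by rewrite sumr_ge0.
have := a0 x => h1 h2.
have : 0 <= (a x * \sum_(i <- r) a i) *+ 2 by rewrite mulrn_wge0 // mulr_ge0.
lra.
Qed.

Lemma enorm_l1 k (u : 'cV[R]_k) : enorm u <= \sum_i `|u i 0|.
Proof.
apply: ler_sq_enorm; first by rewrite sumr_ge0.
rewrite enorm_sq /ip; apply: le_trans (sq_sum_le _ _) => //.
by apply/ler_sum => i _; rewrite -expr2 real_normK // num_real.
Qed.

Lemma coord_le k (u : 'cV[R]_k) i : `|u i 0| <= enorm u.
Proof.
apply: ler_sq_enorm; first exact: enorm_ge0.
rewrite enorm_sq /ip (bigD1 i) //= real_normK ?num_real // expr2 lerDl.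
by rewrite sumr_ge0 // => j _; rewrite -expr2 sqr_ge0.
Qed.

Lemma mx_bound p k (Q : 'M[R]_(p, k)) :
  exists2 L, 0 <= L & forall y, enorm (Q *m y) <= L * enorm y.
Proof.
exists (\sum_i \sum_j `|Q i j|); first by apply: sumr_ge0 => i _; apply: sumr_ge0. 
move=> y; apply: le_trans (enorm_l1 _) _; rewrite mulr_suml.
apply: ler_sum => i _; rewrite mxE mulr_suml.
apply: le_trans (ler_norm_sum _ _ _) _.
apply: ler_sum => j _; rewrite normrM ler_wpM2l //; exact: coord_le.
Qed.

End Basics.

Section Inf.
Variable R : realType.

Lemma dist_le k (x : 'cV[R]_k) C z : C z -> dist x C <= enorm (x - z).
Proof.
move=> Cz; apply: ge_inf; last by exists z.
by exists 0 => _ [w _ <-]; exact: enorm_ge0.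
Qed.

Lemma dist_approx k (x : 'cV[R]_k) C (eps : R) : C !=set0 -> 0 < eps ->
  exists z, C z /\ enorm (x - z) < dist x C + eps.
Proof.
move=> [z0 Cz0] e0.
have hi : has_inf [set enorm (x - z) | z in C].
  split; first by exists (enorm (x - z0)), z0.
  by exists 0 => _ [w _ <-]; exact: enorm_ge0.
have [e [z Cz <-] h] := inf_adherent e0 hi.
by exists z.
Qed.

Lemma unit_normalize k (v : 'cV[R]_k) : v != 0 ->
  enorm ((enorm v)^-1 *: v) = 1.
Proof.
move=> v0; have np : 0 < enorm v.
  by rewrite lt_neqAle enorm_ge0 andbT; apply/eqP => /esym /enorm_eq0 /eqP; rewrite (negbTE v0).
by rewrite enormZ ger0_norm ?invr_ge0 ?enorm_ge0 // mulVf // gt_eqF.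
Qed.

Lemma enorm_pos k (v : 'cV[R]_k) : v != 0 -> 0 < enorm v.
Proof.
by move=> v0; rewrite lt_neqAle enorm_ge0 andbT; apply/eqP => /esym /enorm_eq0 /eqP; rewrite (negbTE v0).
Qed.

Lemma smax_bound p k (A : 'M[R]_(p, k)) v :
  enorm (A *m v) <= sigma_max A * enorm v.
Proof.
have [->|v0] := eqVneq v 0; first by rewrite mulmx0 !enorm0 mulr0.
have np := enorm_pos v0.
have [L L0 HL] := mx_bound A.
have : enorm (A *m ((enorm v)^-1 *: v)) <= sigma_max A.
  apply: ub_le_sup; last by exists ((enorm v)^-1 *: v) => //; exact: unit_normalize.
  by exists L => _ [w /= w1 <-]; rewrite -[L]mulr1 -w1 HL.
rewrite -scalemxAr enormZ ger0_norm ?invr_ge0 ?enorm_ge0 // mulrC.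
by rewrite -ler_pdivlMr // ?invr_gt0 // invrK.
Qed.

Lemma smax_ge0 p k (A : 'M[R]_(p, k)) : 0 <= sigma_max A.
Proof.
have [[x x1]|nx] := pselect (exists x : 'cV[R]_k, enorm x = 1).
  by have := smax_bound A x; rewrite x1 mulr1; apply: le_trans; exact: enorm_ge0.
rewrite /sigma_max (_ : [set _ | _ in _] = set0) ?sup0 //.
by apply/seteqP; split => // _ [w /= w1 _]; apply: nx; exists w.
Qed.

Lemma smin_ge0 p k (A : 'M[R]_(p, k)) V : 0 <= sigma_min_on A V.
Proof.
have [[x x1]|nx] := pselect (exists x : 'cV[R]_k, V x /\ enorm x = 1).
  apply: lb_le_inf; first by exists (enorm (A *m x)), x.
  by move=> _ [w _ <-]; exact: enorm_ge0.
rewrite /sigma_min_on (_ : [set _ | _ in _] = set0) ?inf0 //.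
by apply/seteqP; split => // _ [w /= w1 _]; apply: nx; exists w.
Qed.

Lemma smin_le p k (A : 'M[R]_(p, k)) V v : V v -> enorm v = 1 ->
  sigma_min_on A V <= enorm (A *m v).
Proof.
move=> Vv v1; apply: ge_inf; last by exists v.
by exists 0 => _ [w _ <-]; exact: enorm_ge0.
Qed.

Lemma smin_lb p k (A : 'M[R]_(p, k)) V (kap : R) : 0 < kap ->
  (forall v, V v -> enorm v <= kap * enorm (A *m v)) ->
  (exists v, V v /\ enorm v = 1) -> kap^-1 <= sigma_min_on A V.
Proof.
move=> k0 H [v [Vv v1]]; apply: lb_le_inf; first by exists (enorm (A *m v)), v.
move=> _ [w [Vw w1] <-]; rewrite -[kap^-1]mulr1 ler_pdivrMl // -w1; exact: H.
Qed.

End Inf.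

Section Lin.
Variable R : realType.
Variable n : nat.

Lemma basis_exists (F : set 'cV[R]_n) :
  exists k (M : 'M[R]_(k, n)), [/\ row_free M, (forall i, F (row i M)^T) &
    (forall x, F x -> (x^T <= M)%MS)].
Proof.
pose P k := exists M : 'M[R]_(k, n), row_free M /\ forall i, F (row i M)^T.
have P0 : exists i, `[< P i >].
  exists 0%N; apply/asboolP; exists 0; split; last by case.
  by rewrite /row_free mxrank0.
have Pub : forall i, `[< P i >] -> (i <= n)%N.
  move=> i /asboolP [M [/eqP e _]]; rewrite -e; exact: rank_leq_col.
case: (ex_maxnP P0 Pub) => k /asboolP [M [fM FM]] kmax.
exists k, M; split => // x Fx; apply: contrapT => xM.
have : `[< P (k + 1)%N >].
  apply/asboolP; exists (col_mx M x^T); split.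
    rewrite /row_free -addsmxE eqn_leq; apply/andP; split.
      apply: leq_trans (mxrank_adds_leqif M x^T) _; rewrite (eqP fM) leq_add2l; exact: rank_leq_row.
    have := ltn_leqif (mxrank_leqif_sup (addsmxSl M x^T)).
    rewrite (eqP fM) addsmx_sub submx_refl /= addn1 => ->; exact/negP.
  move=> i; case: (split_ordP i) => j ->; first by rewrite rowKu.
  rewrite rowKd (ord1 j) (_ : row 0 x^T = x^T) ?trmxK //.
  by apply/matrixP => a b; rewrite !mxE (ord1 a).
by move/kmax; rewrite addn1 ltnn.
Qed.

Lemma aff_char (F : set 'cV[R]_n) k (M : 'M[R]_(k, n)) :
  F 0 -> (forall i, F (row i M)^T) -> (forall x, F x -> (x^T <= M)%MS) ->
  forall x, aff F x <-> (x^T <= M)%MS.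
Proof.
move=> F0 FM MF x; split.
  move=> [j [p [w [Fp _ ->]]]]; rewrite linear_sum /=.
  by apply: summx_sub => i _; rewrite linearZ /= scalemx_sub // MF.
move=> /submxP [D eD].
have ex : x = \sum_(j < k) D 0 j *: (row j M)^T.
  by rewrite -[x]trmxK eD mulmx_sum_row linear_sum; apply: eq_bigr => j _; rewrite linearZ.
exists k.+1, (fun i => if unlift ord_max i is Some j then (row j M)^T else 0),
  (fun i => if unlift ord_max i is Some j then D 0 j else 1 - \sum_(j < k) D 0 j).
split.
- by move=> i; case: (unlift _ i).
- rewrite big_ord_recr /= unlift_none.
  rewrite (eq_bigr (fun j => D 0 j)) ?subrKC // => j _.
  have -> : widen_ord (leqnSn k) j = lift ord_max j.
    by apply: val_inj; rewrite /= /bump leqNgt ltn_ord.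
  by rewrite liftK.
- rewrite big_ord_recr /= unlift_none scaler0 addr0 ex.
  apply: eq_bigr => j _.
  have -> : widen_ord (leqnSn k) j = lift ord_max j.
    by apply: val_inj; rewrite /= /bump leqNgt ltn_ord.
  by rewrite liftK.
Qed.

Lemma proj_char (V : set 'cV[R]_n) x p : V p -> (forall z, V z -> V (p - z)) ->
  (forall z, V z -> ip z (x - p) = 0) -> proj V x = p.
Proof.
move=> Vp Vsub orthp.
have key : forall z, V z -> enorm (x - z) ^+ 2 = enorm (x - p) ^+ 2 + enorm (p - z) ^+ 2.
  move=> z Vz; rewrite -pythag; first by rewrite addrA subrK.
  by rewrite ipC orthp //; apply: Vsub.
apply: xget_unique.
  split => // w Vw; apply: ler_sq_enorm; first exact: enorm_ge0.
  rewrite (key w) // lerDl; exact: sqr_ge0.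
move=> q [Vq qmin].
have := qmin p Vp; have := key q Vq => e h.
have : enorm (p - q) ^+ 2 <= 0.
  have h2 : enorm (x - q) ^+ 2 <= enorm (x - p) ^+ 2.
    by rewrite ler_sqr ?nnegrE ?enorm_ge0.
  lra.
move=> h3; have : enorm (p - q) = 0.
  apply/eqP; rewrite -sqrf_eq0 eq_le h3 sqr_ge0 //.
by move/enorm_eq0/eqP; rewrite subr_eq0 => /eqP.
Qed.

End Lin.

Section Proj.
Variable R : realType.
Variables (n k : nat) (M : 'M[R]_(k, n)).
Hypothesis fM : row_free M.

Definition Vm : set 'cV[R]_n := [set x | (x^T <= M)%MS].

Lemma Vm_sub x y : Vm x -> Vm y -> Vm (x - y).
Proof. by rewrite /Vm /= linearB /= => hx hy; rewrite addmx_sub // -scaleN1r scalemx_sub. Qed.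
Lemma Vm_add x y : Vm x -> Vm y -> Vm (x + y).
Proof. by rewrite /Vm /= linearD /= => hx hy; rewrite addmx_sub. Qed.
Lemma Vm_scale a x : Vm x -> Vm (a *: x).
Proof. by rewrite /Vm /= linearZ /= => hx; rewrite scalemx_sub. Qed.
Lemma Vm_col (c : 'cV[R]_k) : Vm (M^T *m c).
Proof. by rewrite /Vm /= trmx_mul trmxK submxMl. Qed.

Lemma gram_unit : M *m M^T \in unitmx.
Proof.
rewrite -row_free_unit; apply: inj_row_free => v hv.
have h : ip (v *m M)^T (v *m M)^T = 0.
  by rewrite ipE trmxK trmx_mul !mulmxA -(mulmxA v) hv !mul0mx mxE.
move/ip_eq0: h => /(congr1 trmx); rewrite trmxK trmx0 => /eqP.
by rewrite mulmx_free_eq0 // => /eqP.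
Qed.

Definition Pm := M^T *m invmx (M *m M^T) *m M.

Lemma Pm_in (x : 'cV[R]_n) : Vm (Pm *m x).
Proof. by rewrite /Pm -!mulmxA; apply: Vm_col. Qed.

Lemma Pm_orth (x : 'cV[R]_n) : M *m (x - Pm *m x) = 0.
Proof.
by rewrite mulmxBr /Pm !mulmxA mulmxV ?gram_unit // mul1mx subrr.
Qed.

Lemma orth_of z (y : 'cV[R]_n) : Vm z -> M *m y = 0 -> ip z y = 0.
Proof.
by move=> /submxP [D eD] h; rewrite ipE eD -mulmxA h mulmx0 mxE.
Qed.

Lemma projV x : proj Vm x = Pm *m x.
Proof.
apply: proj_char; first exact: Pm_in.
  by move=> z Vz; apply: Vm_sub => //; exact: Pm_in.
by move=> z Vz; apply: orth_of => //; exact: Pm_orth.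
Qed.

Lemma projVo x : proj (orth Vm) x = x - Pm *m x.
Proof.
apply: proj_char.
- by move=> u Vu; apply: orth_of => //; exact: Pm_orth.
- by move=> z oz u Vu; rewrite ipBr (orth_of Vu (Pm_orth x)) oz // subrr.
- by move=> z oz; rewrite opprB addrC subrK ipC; apply: oz; exact: Pm_in.
Qed.

Variables (m : nat) (A : 'M[R]_(m, n)).
Definition Qm := M^T *m (pinvmx (A *m M^T)^T)^T.

Lemma Q_in (y : 'cV[R]_m) : Vm (Qm *m y).
Proof. by rewrite /Qm -mulmxA; apply: Vm_col. Qed.

Lemma Q_sol v : Vm v -> A *m (Qm *m (A *m v)) = A *m v.
Proof.
move=> /submxP [D eD].
have sub : ((A *m v)^T <= (A *m M^T)^T)%MS.
  by rewrite trmx_mul eD trmx_mul trmxK -mulmxA submxMl.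
have := mulmxKpV sub; rewrite /Qm; move: (pinvmx _) => Pi.
move=> /(congr1 trmx); rewrite !trmx_mul !trmxK => e.
by rewrite !mulmxA -e !mulmxA.
Qed.

End Proj.

Lemma vsplit (R : realType) p q (x y z : 'M[R]_(p, q)) : x - z = (x - y) + (y - z).
Proof. by rewrite addrA subrK. Qed.

Section Core.
Variable R : realType.
Variables (m n : nat) (K : set 'cV[R]_n) (A : 'M[R]_(m,n)) (b : 'cV[R]_m)
  (c : 'cV[R]_n) (xs : 'cV[R]_n) (ys : 'cV[R]_m).
Local Notation s := (c - A^T *m ys).
Local Notation F := (compl_face K s).
Local Notation X := (primal_sol K A b c).
Hypothesis Kadd : forall x y, K x -> K y -> K (x + y).
Hypothesis Kscale : forall (t : R) x, 0 <= t -> K x -> K (t *: x).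
Hypothesis dfe : dual_cone K s.
Hypothesis Axs : A *m xs = b.
Hypothesis Fxs : F xs.
Hypothesis F0 : F 0.
Variables (k : nat) (M : 'M[R]_(k, n)).
Hypothesis fM : row_free M.
Hypothesis FV : forall x, F x -> Vm M x.
Variable erel : R.
Hypothesis erel0 : 0 < erel.
Hypothesis Hrel : forall z, Vm M z -> enorm (z - xs) < erel -> F z.
Variable kap : R.
Hypothesis kap0 : 0 < kap.
Hypothesis Hkap : forall y, enorm (Qm M A *m y) <= kap * enorm y.

Lemma X1 p : F p -> A *m p = b -> X p.
Proof.
move=> [Kp sp] Ap; split; first by split.
move=> x' [Ax' Kx'].
have ce : forall z, ip c z = ip s z + ip ys (A *m z).
  by move=> z; rewrite -{1}(subrK (A^T *m ys) c) (ipDl (c - A^T *m ys)) ipMl trmxK.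
rewrite !ce Ap Ax' (ipC _ p) sp add0r lerDr.
exact: (dfe Kx').
Qed.

Lemma Xxs : X xs.
Proof. exact: X1. Qed.

Lemma Fconv x y (t : R) : F x -> F y -> 0 <= t <= 1 -> F ((1 - t) *: x + t *: y).
Proof.
move=> [Kx sx] [Ky sy] /andP[t0 t1]; split.
  by apply: Kadd; apply: Kscale => //; rewrite subr_ge0.
by rewrite ipDl !ipZl sx sy !mulr0 addr0.
Qed.

Lemma Qsolve gg : Vm M gg ->
  A *m (Qm M A *m (A *m gg - b)) = A *m gg - b /\ Vm M (Qm M A *m (A *m gg - b)).
Proof.
move=> Vg; split; last exact: Q_in.
have -> : A *m gg - b = A *m (gg - xs) by rewrite mulmxBr Axs.
by apply: Q_sol; apply: Vm_sub => //; exact: FV.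
Qed.

Let r := erel / 2.
Lemma r0 : 0 < r. Proof. by rewrite /r divr_gt0. Qed.

Lemma Local gg : F gg -> exists p, X p /\
  enorm (gg - p) <= kap * enorm (A *m gg - b) * (1 + enorm (gg - xs) / r).
Proof.
move=> Fg.
have rp := r0.
have D0 := enorm_ge0 (gg - xs).
have hD : 0 <= 1 + enorm (gg - xs) / r by rewrite addr_ge0 // divr_ge0 // ltW.
have [Ae Ve] := Qsolve (FV Fg).
set y := A *m gg - b in Ae Ve *; set e := Qm M A *m y in Ae Ve *.
have ne_le : enorm e <= kap * enorm y := Hkap y.
have [e0|en0] := eqVneq e 0.
  exists gg; split.
    apply: X1 => //; have : y = 0 by rewrite -Ae e0 mulmx0.
    by move/eqP; rewrite subr_eq0 => /eqP.
  by rewrite subrr enorm0 mulr_ge0 // mulr_ge0 ?enorm_ge0 // ltW.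
have nep := enorm_pos en0.
set ne := enorm e.
set lam := ne / (r + ne).
set q := xs - (r / ne) *: e.
have Fq : F q.
  apply: Hrel; first by apply: Vm_sub; [exact: FV | exact: Vm_scale].
  rewrite /q addrAC subrr add0r enormN enormZ ger0_norm ?divr_ge0 ?ltW // -/ne.
  by rewrite mulfVK ?gt_eqF // /r ltr_pdivrMr // mulr_natr mulr2n ltrDl.
have lam0 : 0 <= lam by rewrite /lam divr_ge0 // ltW // addr_gt0.
have lam1 : lam <= 1 by rewrite /lam ler_pdivrMr ?addr_gt0 // mul1r lerDr ltW.
exists ((1 - lam) *: gg + lam *: q); split.
  apply: X1; first by apply: Fconv => //; rewrite lam0 lam1.
  rewrite mulmxDr -!scalemxAr /q mulmxBr -scalemxAr Ae Axs /y.
  apply/matrixP => i j; rewrite !mxE /lam; field.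
  by rewrite !gt_eqF ?addr_gt0.
have -> : gg - ((1 - lam) *: gg + lam *: q) = lam *: (gg - xs) + (1 - lam) *: e.
  apply/matrixP => i j; rewrite /q !mxE /lam; field.
  by rewrite !gt_eqF ?addr_gt0.
apply: le_trans (enormD _ _) _.
rewrite !enormZ !ger0_norm ?subr_ge0 // -/ne.
have lamr : lam <= ne / r.
  rewrite /lam ler_pM2l // lef_pV2 ?posrE ?addr_gt0 // lerDl ltW //.
have h1 : lam * enorm (gg - xs) <= ne / r * enorm (gg - xs) by rewrite ler_wpM2r.
have h2 : (1 - lam) * ne <= ne.
  have l1 : 1 - lam <= 1 by rewrite lerBlDr lerDl.
  by rewrite ler_piMl // ltW.
have h3 : ne * (1 + enorm (gg - xs) / r) <= kap * enorm y * (1 + enorm (gg - xs) / r).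
  by rewrite ler_wpM2r.
apply: le_trans h3.
rewrite mulrDr mulr1 addrC mulrA; lra.
Qed.

Variable Mb : R.
Hypothesis HMb : forall p, X p -> enorm p <= Mb.

Lemma Mb0 : 0 <= Mb.
Proof. exact: le_trans (enorm_ge0 xs) (HMb Xxs). Qed.

Let T := 2 * Mb + 1.
Let H := kap * T * (1 + T / r).

Lemma T0 : 0 < T. Proof. have := Mb0; rewrite /T; lra. Qed.
Lemma H0 : 0 <= H.
Proof.
have := T0; have := r0 => rp tp.
have h1 : 0 <= 1 + T / r by rewrite addr_ge0 // divr_ge0 // ltW.
by rewrite /H mulr_ge0 // mulr_ge0 // ltW.
Qed.

Lemma Far f : F f -> enorm (f - xs) <= T + H * enorm (A *m f - b).
Proof.
move=> Ff.
have tp := T0; have hp := H0; have rp := r0.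
have ep := enorm_ge0 (A *m f - b).
have hHe : 0 <= H * enorm (A *m f - b) by rewrite mulr_ge0.
case: (lerP (enorm (f - xs)) T) => hD; first by apply: le_trans hD _; rewrite lerDl.
have Dp : 0 < enorm (f - xs) by apply: lt_trans hD.
set D := enorm (f - xs) in hD Dp *.
set t := T / D.
have t0 : 0 <= t by rewrite /t divr_ge0 // ltW.
have t1 : t <= 1 by rewrite /t ler_pdivrMr // mul1r ltW.
have Fg := Fconv Fxs Ff (t := t); rewrite t0 t1 /= in Fg.
have [p [Xp hp2]] := Local (Fg isT).
have e1 : (1 - t) *: xs + t *: f - xs = t *: (f - xs).
  by apply/matrixP => i j; rewrite !mxE; ring.
have e2 : A *m ((1 - t) *: xs + t *: f) - b = t *: (A *m f - b).
  rewrite mulmxDr -!scalemxAr Axs.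
  by apply/matrixP => i j; rewrite !mxE; ring.
rewrite e1 e2 !enormZ ger0_norm // -/D in hp2.
have tD : t * D = T by rewrite /t mulfVK // gt_eqF.
rewrite tD in hp2.
have low : T <= enorm ((1 - t) *: xs + t *: f - p) + 2 * Mb.
  have := enormD ((1 - t) *: xs + t *: f - p) (p - xs).
  rewrite addrA subrK e1 enormZ ger0_norm // -/D tD => h.
  apply: le_trans h _; rewrite lerD2l.
  apply: le_trans (enormD _ _) _; rewrite enormN.
  have := HMb Xp; have := HMb Xxs; lra.
set Z := kap * enorm (A *m f - b) * (1 + T / r).
have eqZ : kap * (t * enorm (A *m f - b)) * (1 + T / r) = Z * t by rewrite /Z; ring.
have hZ : 1 <= Z * t.
  have h1 : 1 = T - 2 * Mb by rewrite /T; ring.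
  rewrite -eqZ {1}h1; lra.
have : D <= Z * T.
  by move: hZ; rewrite /t mulrA ler_pdivlMr // mul1r.
have -> : Z * T = H * enorm (A *m f - b) by rewrite /Z /H; ring.
move=> h; apply: le_trans h _; rewrite lerDr ltW //.
Qed.

Let C1 := kap * (1 + (T + H) / r) + T + H.

Lemma C10 : 0 <= C1.
Proof.
have tp := T0; have hp := H0; have rp := r0.
have rp' := ltW rp; have tp' := ltW tp; have kp' := ltW kap0.
have h1 : 0 <= (T + H) / r by rewrite divr_ge0 // addr_ge0.
have h2 : 0 <= kap * (1 + (T + H) / r) by rewrite mulr_ge0 // addr_ge0.
rewrite /C1; have := ltW tp; lra.
Qed.

Lemma DistF f : F f -> dist f X <= C1 * enorm (A *m f - b).
Proof.
move=> Ff.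
have tp := T0; have hp := H0; have rp := r0.
have ep := enorm_ge0 (A *m f - b).
set eps := enorm (A *m f - b) in ep *.
have hF := Far Ff; rewrite -/eps in hF.
have [p [Xp hp2]] := Local Ff; rewrite -/eps in hp2.
have rp' := ltW rp; have tp' := ltW tp; have kp' := ltW kap0.
have hX : 0 <= kap * (1 + (T + H) / r) by rewrite mulr_ge0 // addr_ge0 // divr_ge0 // addr_ge0.
case: (lerP eps 1) => he.
  apply: le_trans (dist_le _ Xp) _; apply: le_trans hp2 _.
  have h1 : enorm (f - xs) / r <= (T + H) / r.
    rewrite ler_pM2r ?invr_gt0 //; apply: le_trans hF _.
    by rewrite lerD2l ler_piMr.
  have ke : 0 <= kap * eps by rewrite mulr_ge0.
  have h2 : kap * eps * (1 + enorm (f - xs) / r) <= kap * eps * (1 + (T + H) / r).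
    by rewrite ler_wpM2l // lerD2l.
  apply: le_trans h2 _.
  rewrite mulrAC ler_wpM2r // /C1; lra.
apply: le_trans (dist_le _ Xxs) _; apply: le_trans hF _.
have h3 : T <= T * eps by rewrite ler_peMr // ltW.
have h4 : (T + H) * eps <= C1 * eps by rewrite ler_wpM2r // /C1; lra.
rewrite mulrDl in h4; lra.
Qed.

Lemma part1 (x xp : 'cV[R]_n) :
  dist x X <= (1 + C1 * sigma_max A) * enorm (xp - Pm M *m xp)
    + C1 * enorm (A *m x - b)
    + (1 + C1 * sigma_max A) * enorm ((x - xp) - Pm M *m (x - xp))
    + (1 + C1 * sigma_max A) * enorm (Pm M *m (x - xp))
    + (1 + C1 * sigma_max A) * dist (Pm M *m xp) F.
Proof.
have sg0 := smax_ge0 A; have c0 := C10.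
set sg := sigma_max A.
have g20 : 0 <= C1 * sg by rewrite mulr_ge0.
set W1 := enorm (xp - Pm M *m xp).
set W2 := enorm ((x - xp) - Pm M *m (x - xp)).
set a1 := enorm (Pm M *m (x - xp)).
set dF := dist (Pm M *m xp) F.
set E := enorm (A *m x - b).
set w := x - Pm M *m x.
have h8 : enorm w <= W1 + W2.
  have -> : w = (xp - Pm M *m xp) + ((x - xp) - Pm M *m (x - xp)).
    rewrite /w mulmxBr; apply/matrixP => i j; rewrite !mxE; ring.
  exact: enormD.
apply/ler_addgt0Pr => eta eta0.
set eta1 := eta / (2 + C1 * sg).
have e1p : 0 < eta1 by rewrite divr_gt0 // ltr_wpDr.
have [f [Ff h6]] := dist_approx (Pm M *m xp) (ex_intro _ 0 (F0 : F 0)) e1p.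
have [p [Xp h2]] := dist_approx f (ex_intro _ xs Xxs) e1p.
have hd : dist x X <= enorm (x - p) by apply: dist_le.
have h1 : enorm (x - p) <= enorm (x - f) + enorm (f - p).
  by rewrite (vsplit x f p) enormD.
have h3 := DistF Ff.
set d := Pm M *m x - f.
have h4 : enorm (x - f) <= enorm w + enorm d.
  by rewrite (vsplit x (Pm M *m x) f) enormD.
have h5 : enorm d <= a1 + enorm (Pm M *m xp - f).
  by rewrite /d (vsplit (Pm M *m x) (Pm M *m xp) f) /a1 mulmxBr enormD.
have h7 : enorm (A *m f - b) <= E + sg * enorm w + sg * enorm d.
  have -> : A *m f - b = (A *m x - b) - (A *m w + A *m d).
    rewrite -mulmxDr /w /d addrA subrK mulmxBr; apply/matrixP => i j; rewrite !mxE; ring.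
  apply: le_trans (enormD _ _) _; rewrite enormN -addrA lerD2l.
  by apply: le_trans (enormD _ _) _; rewrite lerD // smax_bound.
have h7' : C1 * enorm (A *m f - b) <= C1 * E + C1 * sg * enorm w + C1 * sg * enorm d.
  by rewrite -!mulrA -!mulrDr ler_wpM2l // addrA.
have h8' : C1 * sg * enorm w <= C1 * sg * W1 + C1 * sg * W2 by rewrite -mulrDr ler_wpM2l.
have h5' : C1 * sg * enorm d <= C1 * sg * a1 + C1 * sg * enorm (Pm M *m xp - f).
  by rewrite -mulrDr ler_wpM2l.
have h6' : C1 * sg * enorm (Pm M *m xp - f) <= C1 * sg * dF + C1 * sg * eta1.
  by rewrite -mulrDr ler_wpM2l // ltW.
have eeta : eta = 2 * eta1 + C1 * sg * eta1.
  by rewrite -mulrDl /eta1 mulrC divfK // gt_eqF // ltr_wpDr.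
rewrite eeta !(mulrDl 1 (C1 * sg)) !mul1r.
move: hd h1 h2 h3 h4 h5 h6 h7' h8' h5' h6'.
move: (C1 * sg) => g2; move: (C1 * E) => cE; move: (C1 * enorm (A *m f - b)) => cf.
move=> *; lra.
Qed.

Lemma part2 : (forall p, X p -> p = xs) -> forall (x xp : 'cV[R]_n),
  dist x X <= (1 + (sigma_min_on A (Vm M))^-1 * sigma_max A) * enorm (xp - Pm M *m xp)
    + (sigma_min_on A (Vm M))^-1 * enorm (A *m x - b)
    + (1 + (sigma_min_on A (Vm M))^-1 * sigma_max A) * enorm ((x - xp) - Pm M *m (x - xp))
    + 0 * enorm (Pm M *m (x - xp))
    + 0 * dist (Pm M *m xp) F.
Proof.
move=> Hs x xp.
have rp := r0.
have inj : forall d, Vm M d -> A *m d = 0 -> d = 0.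
  move=> d Vd Ad; apply/eqP; apply: contraT => dn0.
  have ndp := enorm_pos dn0.
  set q := xs + (r / enorm d) *: d.
  have Fq : F q.
    apply: Hrel; first by apply: Vm_add; [exact: FV | exact: Vm_scale].
    rewrite /q addrAC subrr add0r enormZ ger0_norm ?divr_ge0 ?ltW //.
    by rewrite mulfVK ?gt_eqF // /r ltr_pdivrMr // mulr_natr mulr2n ltrDl.
  have Aq : A *m q = b by rewrite /q mulmxDr -scalemxAr Ad scaler0 addr0.
  have := Hs q (X1 Fq Aq); rewrite /q => /eqP; rewrite -subr_eq0 (addrC xs) addrK.
  by rewrite scaler_eq0 (negbTE dn0) orbF mulf_eq0 invr_eq0 !gt_eqF.
have kb : forall v, Vm M v -> enorm v <= kap * enorm (A *m v).
  move=> v Vv.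
  have Ae := Q_sol A Vv.
  have ev : v = Qm M A *m (A *m v).
    apply/eqP; rewrite -subr_eq0; apply/eqP; apply: inj.
      by apply: Vm_sub => //; exact: Q_in.
    by rewrite mulmxBr Ae subrr.
  by rewrite {1}ev; exact: Hkap.
set sm := sigma_min_on A (Vm M).
have sm0 : 0 <= sm := smin_ge0 A (Vm M).
have g0 : 0 <= sm^-1 by rewrite invr_ge0.
have gb : forall v, Vm M v -> enorm v <= sm^-1 * enorm (A *m v).
  move=> v Vv; have [->|vn0] := eqVneq v 0.
    by rewrite enorm0 mulr_ge0 // enorm_ge0.
  have vp := enorm_pos vn0.
  have Vh : Vm M ((enorm v)^-1 *: v) by apply: Vm_scale.
  have smp : 0 < sm.
    apply: lt_le_trans (smin_lb kap0 kb _); first by rewrite invr_gt0.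
    by exists ((enorm v)^-1 *: v); split => //; exact: unit_normalize.
  have h := smin_le A Vh (unit_normalize vn0).
  rewrite -/sm -scalemxAr enormZ ger0_norm in h; last by rewrite invr_ge0 enorm_ge0.
  have h' : sm * enorm v <= enorm (A *m v).
    by move: h; rewrite -(ler_pM2r vp) mulrAC mulVf ?gt_eqF // mul1r.
  apply: le_trans (ler_wpM2l g0 h').
  by rewrite mulrA mulVf ?gt_eqF // mul1r.
have sg0 := smax_ge0 A.
set sg := sigma_max A.
set W1 := enorm (xp - Pm M *m xp).
set W2 := enorm ((x - xp) - Pm M *m (x - xp)).
set E := enorm (A *m x - b).
set w := x - Pm M *m x.
have h8 : enorm w <= W1 + W2.
  have -> : w = (xp - Pm M *m xp) + ((x - xp) - Pm M *m (x - xp)).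
    rewrite /w mulmxBr; apply/matrixP => i j; rewrite !mxE; ring.
  exact: enormD.
have hd : dist x X <= enorm (x - xs) by apply: dist_le; exact: Xxs.
have h1 : enorm (x - xs) <= enorm w + enorm (Pm M *m x - xs).
  by rewrite (vsplit x (Pm M *m x) xs) enormD.
have h2 : enorm (Pm M *m x - xs) <= sm^-1 * enorm (A *m (Pm M *m x - xs)).
  by apply: gb; apply: Vm_sub; [exact: Pm_in | exact: FV].
have h3 : enorm (A *m (Pm M *m x - xs)) <= E + sg * enorm w.
  have -> : A *m (Pm M *m x - xs) = (A *m x - b) - A *m w.
    rewrite -Axs /w !mulmxBr; apply/matrixP => i j; rewrite !mxE; ring.
  by apply: le_trans (enormD _ _) _; rewrite enormN lerD2l smax_bound.
have h3' : sm^-1 * enorm (A *m (Pm M *m x - xs)) <= sm^-1 * E + sm^-1 * sg * enorm w.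
  by rewrite -mulrA -mulrDr ler_wpM2l.
have h8' : sm^-1 * sg * enorm w <= sm^-1 * sg * W1 + sm^-1 * sg * W2.
  by rewrite -mulrDr ler_wpM2l // mulr_ge0.
rewrite !mul0r !addr0 !(mulrDl 1 (sm^-1 * sg)) !mul1r.
move: hd h1 h2 h3' h8' h8; move: (sm^-1 * sg) => g2; move: (sm^-1 * E) => gE.
move: (sm^-1 * enorm (A *m (Pm M *m x - xs))) => gA.
move=> *; lra.
Qed.

Lemma part1_ex : exists g g' : R, [/\ 0 <= g, 0 <= g' & forall (x xp : 'cV[R]_n),
  dist x X <= (1 + g * sigma_max A) * enorm (xp - Pm M *m xp)
    + g * enorm (A *m x - b)
    + (1 + g * sigma_max A) * enorm ((x - xp) - Pm M *m (x - xp))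
    + g' * enorm (Pm M *m (x - xp))
    + g' * dist (Pm M *m xp) F].
Proof.
exists C1, (1 + C1 * sigma_max A); split; first exact: C10.
  by rewrite addr_ge0 // mulr_ge0 ?C10 ?smax_ge0.
exact: part1.
Qed.

End Core.


Unset Implicit Arguments.
Set Strict Implicit.

Theorem theorem1 (R : realType) (m n : nat) (K : set 'cV[R]_n)
  (A : 'M[R]_(m, n)) (b : 'cV[R]_m) (c : 'cV[R]_n)
  (xs : 'cV[R]_n) (ys : 'cV[R]_m) :
  proper_cone K ->
  strong_duality K A b c ->
  primal_sol K A b c xs ->
  dual_sol K A b c ys ->
  relint (compl_face K (c - A^T *m ys)) xs ->
  (exists g g' : R, [/\ 0 <= g, 0 <= g' &
     error_bound K A b c (c - A^T *m ys) g g'])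
  /\
  ((exists x0, primal_sol K A b c = [set x0]) ->
     error_bound K A b c (c - A^T *m ys)
       (sigma_min_on A (compl_space K (c - A^T *m ys)))^-1 0).
Proof.
move=> [[K0 Kadd Kscale _] _] [_ _ [_ [Mb HMb]] _] [[Axs Kxs] xsopt] [dfe _]
  [Fxs [erel erel0 Hrel0]].
have F0 : compl_face K (c - A^T *m ys) 0 by split => //; rewrite ip0l.
have [k [M [fM FM MF]]] := basis_exists (compl_face K (c - A^T *m ys)).
have AC := aff_char F0 FM MF.
have EV : compl_space K (c - A^T *m ys) = Vm M.
  by apply/funext => x; apply/propext; exact: AC.
have Hrel : forall z, Vm M z -> enorm (z - xs) < erel -> compl_face K (c - A^T *m ys) z.
  by move=> z /AC Vz; apply: Hrel0.
have [L L0 HL] := mx_bound (Qm M A).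
have kap0 : 0 < L + 1 by rewrite ltr_wpDl.
have Hkap : forall y, enorm (Qm M A *m y) <= (L + 1) * enorm y.
  move=> y; apply: le_trans (HL y) _; rewrite ler_wpM2r ?enorm_ge0 // lerDl //.
split.
  have [g [g' [g0 g'0 H]]] := part1_ex Kadd Kscale dfe Axs Fxs F0 MF erel0 Hrel kap0 Hkap HMb.
  exists g, g'; split => //.
  rewrite /error_bound; cbv zeta; rewrite EV => x.
  by rewrite !projV // !projVo //; exact: H.
move=> [x0 Hx0].
have Hs : forall p, primal_sol K A b c p -> p = xs.
  have Xxs : primal_sol K A b c xs by split.
  by move=> p Xp; move: Xp Xxs; rewrite Hx0 => -> ->.
rewrite /error_bound; cbv zeta; rewrite EV => x.
by rewrite !projV // !projVo //; exact: (part2 dfe Axs Fxs MF erel0 Hrel kap0 Hkap Hs).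
Qed.
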